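(* Let $m\geq 1$ and $n\geq 3$. For every $k\in\{1,\ldots,m\}$, there exists exactly one walk in $D^m_n$ of length $2n-2$ from vertex $(k-1)(n-1)+2$ to vertex $(k-1)(n-1)+n$.
   Context: For integers $m\geq 1$, $n\geq 3$, the oriented Dutch windmill graph $D^m_n$ is the directed graph with vertex set $V=\{1,2,\ldots,m(n-1)+1\}$ whose directed edges $(a,b)$ are exactly: $(1,(k-1)(n-1)+2)$ for $k\in\{1,\ldots,m\}$; $((k-1)(n-1)+i,(k-1)(n-1)+i+1)$ for $k\in\{1,\ldots,m\}$ and $i\in\{2,\ldots,n-1\}$; and $((k-1)(n-1)+n,1)$ for $k\in\{1,\ldots,m\}$. A walk is a sequence of vertices $\langle v_1,\ldots,v_r\rangle$ in which each $(v_t,v_{t+1})$ is an edge; its length is $r-1$. *)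

(* Defs.v *)
From mathcomp Require Import all_boot.
Set Implicit Arguments. Unset Strict Implicit. Unset Printing Implicit Defensive.

Definition dw_vertex (m n v : nat) : bool := (1 <= v) && (v <= m * (n - 1) + 1).

Definition dw_edge (m n : nat) (a b : nat) : bool :=
  [|| [exists k : 'I_m, (a == 1) && (b == k * (n - 1) + 2)],
      [exists k : 'I_m, exists i : 'I_n,
          [&& 2 <= i, i <= n - 1, a == k * (n - 1) + i & b == k * (n - 1) + i + 1]]
    | [exists k : 'I_m, (a == k * (n - 1) + n) && (b == 1)]].

Definition is_walk (m n : nat) (w : seq nat) : Prop :=
  w <> [::] /\ all (dw_vertex m n) w /\ sorted (dw_edge m n) w.

Definition walk_length (w : seq nat) : nat := (size w).-1.

(* Main.v *)
Require Import Defs.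
From mathcomp Require Import all_boot zify.
Lemma inj (N j j' i i' : nat) : 2 <= i <= N.+1 -> 2 <= i' <= N.+1 ->
  j * N + i = j' * N + i' -> j = j' /\ i = i'.
Proof.
move=> hi hi' e.
have [h|h|h] := ltngtP j j'.
- have [d ed] : exists d, j' = j + d.+1 by exists (j' - j).-1; lia.
  move: e; rewrite ed mulnDl mulSn; lia.
- have [d ed] : exists d, j = j' + d.+1 by exists (j - j').-1; lia.
  move: e; rewrite ed mulnDl mulSn; lia.
- subst; lia.
Qed.

Lemma edge_blade m N j i b : 2 <= N -> 2 <= i <= N ->
  dw_edge m N.+1 (j * N + i) b -> b = j * N + i + 1.
Proof.
move=> hN hi; rewrite /dw_edge subn1 /=.
case/or3P.
- case/existsP=> k /andP[/eqP h _]; lia.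
- case/existsP=> k /existsP[i' /and4P[h1 h2 /eqP h3 /eqP h4]].
  have [] := @inj N j k i i' _ _ h3; try lia.
- case/existsP=> k /andP[/eqP h _].
  have [] := @inj N j k i N.+1 _ _ h; lia.
Qed.

Lemma edge_end m N j b : 2 <= N ->
  dw_edge m N.+1 (j * N + N.+1) b -> b = 1.
Proof.
move=> hN; rewrite /dw_edge subn1 /=.
case/or3P.
- case/existsP=> k /andP[/eqP h _]; lia.
- case/existsP=> k /existsP[i' /and4P[h1 h2 /eqP h3 /eqP h4]].
  have [] := @inj N j k N.+1 i' _ _ h3; try lia.
- by case/existsP=> k /andP[_ /eqP].
Qed.

Lemma edge_one m N b : 2 <= N ->
  dw_edge m N.+1 1 b -> exists2 j, j < m & b = j * N + 2.
Proof.
move=> hN; rewrite /dw_edge subn1 /=.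
case/or3P.
- by case/existsP=> k /eqP ->; exists k.
- case/existsP=> k /existsP[i' /and4P[h1 h2 /eqP h3 /eqP h4]]; lia.
- case/existsP=> k /andP[/eqP h _]; lia.
Qed.

Lemma sortedP' (e : rel nat) w : w <> [::] ->
  sorted e w <-> (forall t, t.+1 < size w -> e (nth 0 w t) (nth 0 w t.+1)).
Proof.
case: w => [//|x p] _ /=; split.
- by move/(pathP 0)=> h t ht; apply: h.
- by move=> h; apply/(pathP 0)=> t ht; apply: h.
Qed.

Theorem lemma2p11 (m n : nat) (hm : 1 <= m) (hn : 3 <= n) (k : nat)
  (hk1 : 1 <= k) (hkm : k <= m) :
  exists! w : seq nat,
    [/\ is_walk m n w, walk_length w = 2 * n - 2,
        head 0 w = (k - 1) * (n - 1) + 2 & last 0 w = (k - 1) * (n - 1) + n].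
Proof.
have [N eN] : exists N, n = N.+1 by exists n.-1; lia.
subst n; have e1 : N.+1 - 1 = N by lia.
rewrite e1.
have hN : 2 <= N by lia.
set j0 := k - 1.
have hj0 : j0 < m by rewrite /j0; lia.
set c := j0 * N.
have hc : c + N <= m * N.
  by rewrite /c -[_ + N]addnC -mulSn; apply: leq_mul; rewrite /j0; lia.
pose g t := if t < N then c + t + 2 else if t == N then 1 else c + t - N + 1.
exists (mkseq g (2 * N).+1).
have hsz : size (mkseq g (2 * N).+1) = (2 * N).+1 by rewrite size_mkseq.
split.
  split.
  2: by rewrite /walk_length hsz /=; lia.
  2: by rewrite /mkseq /= /g; case: ifP; lia.
  2: by rewrite -nth_last hsz /= nth_mkseq; [rewrite /g; case: ifP; [lia|]; case: eqP; lia | lia].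
  split; first by move=> h; move: hsz; rewrite h.
  split.
    apply/(all_nthP 0)=> t; rewrite hsz => ht; rewrite nth_mkseq //.
    rewrite /dw_vertex e1 /g; case: ifP => ?; [lia|]; case: eqP => ?; lia.
  apply/sortedP'; first by move=> h; move: hsz; rewrite h.
  move=> t; rewrite hsz => ht; rewrite !nth_mkseq; try lia.
  rewrite /dw_edge subn1 /=.
  have [ht1|ht1] := ltnP t.+1 N.
  - have -> : g t = c + (t + 2) by rewrite /g; case: (ltnP t N) => ?; [lia|]; case: eqP => ?; lia.
    have -> : g t.+1 = c + (t + 2) + 1 by rewrite /g; case: (ltnP t.+1 N) => ?; [lia|]; case: eqP => ?; lia.
    apply/or3P; apply: Or32; apply/existsP; exists (Ordinal hj0).
    have hi : t + 2 < N.+1 by lia.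
    apply/existsP; exists (Ordinal hi) => /=.
    apply/and4P; split; [lia|lia| |]; apply/eqP; lia.
  have [et|et] := eqVneq t.+1 N.
  - have -> : g t = c + N.+1 by rewrite /g; case: (ltnP t N) => ?; [lia|]; case: eqP => ?; lia.
    have -> : g t.+1 = 1 by rewrite /g; case: (ltnP t.+1 N) => ?; [lia|]; case: eqP => ?; lia.
    apply/or3P; apply: Or33; apply/existsP; exists (Ordinal hj0) => /=.
    apply/andP; split; apply/eqP; rewrite -/c; lia.
  have [et2|et2] := eqVneq t N.
  - have -> : g t = 1 by rewrite /g; case: (ltnP t N) => ?; [lia|]; case: eqP => ?; lia.
    have -> : g t.+1 = c + 2 by rewrite /g; case: (ltnP t.+1 N) => ?; [lia|]; case: eqP => ?; lia.
    apply/or3P; apply: Or31; apply/existsP; exists (Ordinal hj0) => /=.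
    apply/eqP; rewrite -/c; lia.
  - have -> : g t = c + (t - N + 1) by rewrite /g; case: (ltnP t N) => ?; [lia|]; case: eqP => ?; lia.
    have -> : g t.+1 = c + (t - N + 1) + 1 by rewrite /g; case: (ltnP t.+1 N) => ?; [lia|]; case: eqP => ?; lia.
    apply/or3P; apply: Or32; apply/existsP; exists (Ordinal hj0).
    have hi : t - N + 1 < N.+1 by lia.
    apply/existsP; exists (Ordinal hi) => /=.
    apply/and4P; split; [lia|lia| |]; apply/eqP; rewrite -/c; lia.
move=> w [[wne [_ ws]] wl wh wt].
have szw : size w = (2 * N).+1.
  by move: wl wne; rewrite /walk_length; case: (w) => //= x p; lia.
have := proj1 (@sortedP' (dw_edge m N.+1) w wne) ws => E.
try rewrite -/j0 -/c in wh wt.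
have f0 : nth 0 w 0 = c + 2 by rewrite -wh; case: (w) wne.
have A : forall t, t < N -> nth 0 w t = c + t + 2.
  elim=> [|t IH] ht; first by rewrite f0; lia.
  have := E t; rewrite szw => /(_ ltac:(lia)).
  rewrite IH; last by lia.
  rewrite /c -addnA => /edge_blade -> //; lia.
have fN : nth 0 w N = 1.
  have := E N.-1; rewrite szw => /(_ ltac:(lia)).
  rewrite A; last by lia.
  have -> : c + N.-1 + 2 = j0 * N + N.+1 by rewrite /c; lia.
  by rewrite prednK ?(ltnW hN) // => /edge_end ->.
have [j hj fN1] : exists2 j, j < m & nth 0 w N.+1 = j * N + 2.
  have := E N; rewrite szw => /(_ ltac:(lia)).
  by rewrite fN => /edge_one; apply.
have B : forall s, s < N -> nth 0 w (N.+1 + s) = j * N + s + 2.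
  elim=> [|s IH] hs; first by rewrite addn0 fN1; lia.
  have := E (N.+1 + s); rewrite szw => /(_ ltac:(lia)).
  rewrite IH; last by lia.
  rewrite -addnA => H; rewrite addnS (@edge_blade m N j (s+2) _ hN ltac:(lia) H); lia.
have ej : j = j0.
  have := B N.-1 ltac:(lia).
  have -> : N.+1 + N.-1 = (size w).-1 by rewrite szw; lia.
  rewrite nth_last wt /c.
  have -> : j * N + N.-1 + 2 = j * N + N.+1 by lia.
  by move=> /esym /inj [] //; lia.
subst j.
apply: (@eq_from_nth _ 0); first by rewrite szw hsz.
move=> t; rewrite hsz => ht; rewrite nth_mkseq // /g.
case: ifP => h1; first by rewrite A.
case: eqP => h2; first by rewrite h2 fN.
have -> : t = N.+1 + (t - N.+1) by lia.
rewrite B; last by lia.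
rewrite /c; lia.
Qed.
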